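(* Let $\mathcal{A}$ be a primal algebra and let $<$ be a linear order on its universe $A$. Then $\mathbf{OV}_{\mathit{fin}}(\mathcal{A},<)$ is a reasonable order expansion of $\mathbf{V}_{\mathit{fin}}(\mathcal{A})$.
   Context: A primal algebra is a finite algebra with at least two elements in which every finitary operation on its universe is a term operation. $\mathbf{V}_{\mathit{fin}}(\mathcal{A})$ is the category whose objects are the finite algebras in the variety generated by $\mathcal{A}$ and whose morphisms are embeddings. For a linear order $<$ on $A$ and a positive integer $n$, the antilexicographic order $\sqsubset$ on $A^n$ is: $(x_1,\dots,x_n)\sqsubset(y_1,\dots,y_n)$ iff there is $s$ with $x_t=y_t$ for all $t>s$ and $x_s<y_s$. For a permutation $\pi$ of $\{1,\dots,n\}$, $\bar x\sqsubset_\pi\bar y$ iff $(x_{\pi(1)},\dots,x_{\pi(n)})\sqsubset(y_{\pi(1)},\dots,y_{\pi(n)})$; $\sqsubseteq_\pi$ is its reflexive version and $\mathcal{A}^n_{\sqsubseteq_\pi}$ is the power algebra $\mathcal{A}^n$ expanded by $\sqsubseteq_\pi$. $\mathbf{OV}_{\mathit{fin}}(\mathcal{A},<)$ is the category whose objects are all structures isomorphic to some $\mathcal{A}^n_{\sqsubseteq_\pi}$ and whose morphisms are embeddings. If $\mathbf{C}$ is a category of finite structures with embeddings and $\mathbf{C}^*$ a category of finite ordered structures with embeddings, $\mathbf{C}^*$ is an order expansion of $\mathbf{C}$ if for every object $(A,\Delta,<)$ of $\mathbf{C}^*$ the reduct $(A,\Delta)$ is an object of $\mathbf{C}$ and the forgetful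 functor $U:\mathbf{C}^*\to\mathbf{C}$ (dropping the order, identity on maps) is surjective on objects; it is reasonable if for all objects $\mathcal{A},\mathcal{B}$ of $\mathbf{C}$, every embedding $f:\mathcal{A}\to\mathcal{B}$ and every object $\mathcal{A}_<$ of $\mathbf{C}^*$ with $U(\mathcal{A}_<)=\mathcal{A}$ there is an object $\mathcal{B}_\sqsubset$ of $\mathbf{C}^*$ with $U(\mathcal{B}_\sqsubset)=\mathcal{B}$ and $f$ an embedding of $\mathcal{A}_<$ into $\mathcal{B}_\sqsubset$. *)

(* Defs.v *)
From mathcomp Require Import all_boot perm.
Set Implicit Arguments. Unset Strict Implicit. Unset Printing Implicit Defensive.

Record signature := Signature { fsym : Type; arity : fsym -> nat }.

Definition operations (S : signature) (T : Type) :=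
  forall f : fsym S, ('I_(arity f) -> T) -> T.

Inductive term (S : signature) (k : nat) : Type :=
  | Var : 'I_k -> term S k
  | App : forall f : fsym S, ('I_(arity f) -> term S k) -> term S k.

Fixpoint eval (S : signature) (T : Type) (o : operations S T) (k : nat)
  (v : 'I_k -> T) (t : term S k) : T :=
  match t with
  | Var i => v i
  | App f a => o f (fun j => eval o v (a j))
  end.

Definition primal (S : signature) (A : finType) (oA : operations S A) : Prop :=
  1 < #|A| /\
  forall (k : nat) (g : ('I_k.+1 -> A) -> A),
    exists t : term S k.+1, forall v, eval oA v t = g v.

Definition satisfies_identities_of (S : signature) (A : Type) (oA : operations S A)
  (T : Type) (oT : operations S T) : Prop :=
  forall (k : nat) (s t : term S k),
    (forall v : 'I_k -> A, eval oA v s = eval oA v t) ->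
    forall w : 'I_k -> T, eval oT w s = eval oT w t.

(* Objects of V_fin(A): finite (nonempty) algebras in the variety generated by A. *)
Definition in_Vfin (S : signature) (A : Type) (oA : operations S A)
  (T : finType) (oT : operations S T) : Prop :=
  0 < #|T| /\ satisfies_identities_of oA oT.

Definition is_hom (S : signature) (T1 T2 : Type) (o1 : operations S T1)
  (o2 : operations S T2) (h : T1 -> T2) : Prop :=
  forall (f : fsym S) (args : 'I_(arity f) -> T1),
    h (o1 f args) = o2 f (fun j => h (args j)).

Definition is_embedding (S : signature) (T1 T2 : Type) (o1 : operations S T1)
  (o2 : operations S T2) (h : T1 -> T2) : Prop :=
  is_hom o1 o2 h /\ injective h.

Definition is_ord_embedding (S : signature) (T1 T2 : Type)
  (o1 : operations S T1) (r1 : T1 -> T1 -> Prop)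
  (o2 : operations S T2) (r2 : T2 -> T2 -> Prop) (h : T1 -> T2) : Prop :=
  is_embedding o1 o2 h /\ forall x y, r1 x y <-> r2 (h x) (h y).

Definition power_ops (S : signature) (A : Type) (oA : operations S A) (n : nat)
  : operations S {ffun 'I_n -> A} :=
  fun f args => [ffun i => oA f (fun j => args j i)].

Definition antilex_lt (A : Type) (lt : A -> A -> Prop) (n : nat) (pi : 'S_n)
  (x y : {ffun 'I_n -> A}) : Prop :=
  exists s : 'I_n,
    (forall t : 'I_n, (s < t)%N -> x (pi t) = y (pi t)) /\ lt (x (pi s)) (y (pi s)).

Definition antilex_le (A : Type) (lt : A -> A -> Prop) (n : nat) (pi : 'S_n)
  (x y : {ffun 'I_n -> A}) : Prop :=
  x = y \/ antilex_lt lt pi x y.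

(* Objects of OV_fin(A,<): ordered structures isomorphic to some A^n_{⊑pi}. *)
Definition in_OVfin (S : signature) (A : Type) (oA : operations S A)
  (lt : A -> A -> Prop) (T : finType) (oT : operations S T) (r : T -> T -> Prop)
  : Prop :=
  exists (n : nat) (pi : 'S_n) (h : T -> {ffun 'I_n -> A}),
    bijective h /\ is_ord_embedding oT r (@power_ops S A oA n) (antilex_le lt pi) h.

Definition strict_linear_order (A : Type) (lt : A -> A -> Prop) : Prop :=
  (forall x, ~ lt x x) /\
  (forall x y z, lt x y -> lt y z -> lt x z) /\
  (forall x y, x <> y -> lt x y \/ lt y x).

Definition linear_order (T : Type) (r : T -> T -> Prop) : Prop :=
  (forall x, r x x) /\
  (forall x y, r x y -> r y x -> x = y) /\
  (forall x y z, r x y -> r y z -> r x z) /\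
  (forall x y, r x y \/ r y x).

(* C* is an order expansion of C (with forgetful functor dropping the order). *)
Definition is_order_expansion (S : signature)
  (C : forall T : finType, operations S T -> Prop)
  (Cs : forall T : finType, operations S T -> (T -> T -> Prop) -> Prop) : Prop :=
  (forall (T : finType) (o : operations S T) (r : T -> T -> Prop),
      Cs T o r -> linear_order r /\ C T o) /\
  (forall (T : finType) (o : operations S T), C T o -> exists r, Cs T o r).

Definition is_reasonable (S : signature)
  (C : forall T : finType, operations S T -> Prop)
  (Cs : forall T : finType, operations S T -> (T -> T -> Prop) -> Prop) : Prop :=
  forall (T1 T2 : finType) (o1 : operations S T1) (o2 : operations S T2)
         (f : T1 -> T2),
    C T1 o1 -> C T2 o2 -> is_embedding o1 o2 f ->
    forall r1 : T1 -> T1 -> Prop, Cs T1 o1 r1 ->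
    exists r2 : T2 -> T2 -> Prop, Cs T2 o2 r2 /\ is_ord_embedding o1 r1 o2 r2 f.

(* Main.v *)
Require Import Defs.
From mathcomp Require Import all_boot perm.
From mathcomp Require Import zify.
From Stdlib Require Import FunctionalExtensionality ClassicalEpsilon.
Set Implicit Arguments. Unset Strict Implicit. Unset Printing Implicit Defensive.

Section Gen.
Variable S : signature.

Definition pwops (A : Type) (oA : operations S A) (I : finType)
  : operations S {ffun I -> A} :=
  fun f args => [ffun i => oA f (fun j => args j i)].
Arguments pwops {A} oA I.

Lemma eval_ext A (oA : operations S A) k (v v' : 'I_k -> A) t :
  (forall j, v j = v' j) -> eval oA v t = eval oA v' t.
Proof.
move=> e; elim: t => [i|f a IH] /=; first exact: e.
congr (oA f _); apply: functional_extensionality => j; exact: IH.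
Qed.

Lemma hom_eval T1 T2 (o1 : operations S T1) (o2 : operations S T2) h
  (hh : is_hom o1 o2 h) k (v : 'I_k -> T1) t :
  h (eval o1 v t) = eval o2 (fun j => h (v j)) t.
Proof.
elim: t => [i|f a IH] //=.
rewrite hh; congr (o2 f _); apply: functional_extensionality => j; exact: IH.
Qed.

Lemma eval_pw A (oA : operations S A) (I : finType) k (v : 'I_k -> {ffun I -> A}) t :
  eval (pwops oA I) v t = [ffun m => eval oA (fun j => v j m) t].
Proof.
elim: t => [i|f a IH] /=; first by apply/ffunP => m; rewrite ffunE.
apply/ffunP => m; rewrite /pwops !ffunE; congr (oA f _).
apply: functional_extensionality => j; by rewrite IH ffunE.
Qed.

Section Primal.
Variables (A : finType) (oA : operations S A).
Hypothesis prim : forall (k : nat) (g : ('I_k.+1 -> A) -> A),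
    exists t : term S k.+1, forall v, eval oA v t = g v.

Lemma pw_congr (I : finType) (T : Type) (oT : operations S T)
  (Phi : {ffun I -> A} -> T) :
  is_hom (pwops oA I) oT Phi ->
  forall k (g : ('I_k.+1 -> A) -> A) (v v' : 'I_k.+1 -> {ffun I -> A}),
  (forall j, Phi (v j) = Phi (v' j)) ->
  Phi [ffun m => g (fun j => v j m)] = Phi [ffun m => g (fun j => v' j m)].
Proof.
move=> hPhi k g v v' e; have [t ht] := prim g.
have E : forall w : 'I_k.+1 -> {ffun I -> A},
    [ffun m => g (fun j => w j m)] = eval (pwops oA I) w t.
  by move=> w; rewrite eval_pw; apply/ffunP => m; rewrite !ffunE ht.
rewrite !E !(hom_eval hPhi); exact: eval_ext.
Qed.

Variables (a0 a1 : A).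
Hypothesis a01 : a0 != a1.

Lemma kernel_set (I : finType) (T : finType) (oT : operations S T)
  (Phi : {ffun I -> A} -> T) :
  is_hom (pwops oA I) oT Phi ->
  exists J : {set I}, forall x y, Phi x = Phi y <-> {in J, forall m, x m = y m}.
Proof.
move=> hPhi.
pose one := [ffun _ : I => a1].
pose e (X : {set I}) := [ffun m => if m \in X then a1 else a0].
have eA : forall X m, (e X m == a1) = (m \in X).
  by move=> X m; rewrite ffunE; case: (m \in X); rewrite ?eqxx // (negbTE a01).
pose U := [set X : {set I} | Phi (e X) == Phi one].
pose J := \bigcap_(X in U) X.
have UT : setT \in U.
  by rewrite inE; apply/eqP; congr Phi; apply/ffunP=> m; rewrite !ffunE in_setT.
have UI : forall X Y, X \in U -> Y \in U -> X :&: Y \in U.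
  move=> X Y; rewrite !inE => /eqP hX /eqP hY; apply/eqP.
  pose g := fun w : 'I_2 -> A =>
    if (w ord0 == a1) && (w ord_max == a1) then a1 else a0.
  have := pw_congr hPhi g (v := fun j : 'I_2 => if val j == 0 then e X else e Y)
     (v' := fun _ => one).
  have -> : [ffun m => g (fun j : 'I_2 => (if val j == 0 then e X else e Y) m)]
       = e (X :&: Y).
    apply/ffunP => m; rewrite /g /e /= !ffunE inE.
    by case: (m \in X); case: (m \in Y); rewrite ?eqxx ?(negbTE a01).
  have -> : [ffun m => g (fun j : 'I_2 => one m)] = one.
    by apply/ffunP => m; rewrite /g /= !ffunE eqxx.
  apply; case=> [[|[|]]] //= _.
have UJ : J \in U.
  rewrite /J; apply: (big_ind (fun X => X \in U)) => //.
exists J; split.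
- move=> exy m mJ.
  have : [set m | x m == y m] \in U.
    rewrite inE; apply/eqP.
    pose g := fun w : 'I_2 -> A => if w ord0 == w ord_max then a1 else a0.
    have := pw_congr hPhi g (v := fun j : 'I_2 => if val j == 0 then x else y)
     (v' := fun _ => x).
    have -> : [ffun m => g (fun j : 'I_2 => (if val j == 0 then x else y) m)]
       = e [set m | x m == y m].
      by apply/ffunP => m'; rewrite /g /= !ffunE inE.
    have -> : [ffun m => g (fun j : 'I_2 => x m)] = one.
      by apply/ffunP => m'; rewrite /g /= !ffunE eqxx.
    apply; case=> [[|[|]]] //= _.
  move=> /(bigcap_inf _) /subsetP /(_ m mJ); rewrite inE => /eqP //.
- move=> agr.
  have hJ : Phi (e J) = Phi one by move: UJ; rewrite inE => /eqP.
  pose g := fun w : 'I_3 -> A =>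
    if w (@Ordinal 3 0 isT) == a1 then w (@Ordinal 3 1 isT) else w (@Ordinal 3 2 isT).
  pose v := fun c : {ffun I -> A} => fun j : 'I_3 =>
     match val j with 0 => c | 1 => y | _ => x end.
  have := pw_congr hPhi g (v := v (e J)) (v' := v one).
  have -> : [ffun m => g (fun j => v (e J) j m)] = x.
    apply/ffunP => m; rewrite /g /v /e /= !ffunE.
    case mJ: (m \in J); rewrite ?eqxx ?(negbTE a01) //; exact/esym/agr.
  have -> : [ffun m => g (fun j => v one j m)] = y.
    by apply/ffunP => m; rewrite /g /v /= !ffunE eqxx.
  apply; case=> [[|[|[|]]]] //= _.
Qed.


Hypothesis A2 : 1 < #|A|.

Lemma const_hom (I : finType) (phi : {ffun I -> A} -> A) :
  is_hom (pwops oA I) oA phi -> forall a, phi [ffun _ => a] = a.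
Proof.
move=> hphi a; have [t ht] := @prim 0 (fun _ => a).
have E : [ffun _ : I => a] = eval (pwops oA I) (fun _ => [ffun _ : I => a]) t.
  by rewrite eval_pw; apply/ffunP => m; rewrite !ffunE ht.
by rewrite E (hom_eval hphi) ht.
Qed.

Lemma proj_hom n (phi : {ffun 'I_n -> A} -> A) :
  is_hom (pwops oA 'I_n) oA phi -> exists i, forall x, phi x = x i.
Proof.
move=> hphi; have [J hJ] := kernel_set hphi.
have c := const_hom hphi.
have [i iJ] : exists i, i \in J.
  case: (set_0Vmem J) => [J0|[x xJ]]; last by exists x.
  have : phi [ffun _ => a0] = phi [ffun _ => a1].
    by apply/hJ => m; rewrite J0 inE.
  by rewrite !c => /eqP; rewrite (negbTE a01).
have Ji : forall k, k \in J -> k = i.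
  move=> k kJ; apply/eqP; apply/negP => /negP nki.
  pose psi := fun p : A * A =>
    phi [ffun l => if l == i then p.1 else if l == k then p.2 else a0].
  have psi_inj : injective psi.
    move=> [p1 p2] [q1 q2] /hJ e.
    have := e i iJ; have := e k kJ; rewrite !ffunE eqxx (negbTE nki) eqxx /=.
    by move=> -> ->.
  have := @leq_card _ _ psi psi_inj; rewrite card_prod; nia.
exists i => x; rewrite -[RHS]c; apply/hJ => k kJ; by rewrite (Ji k kJ) ffunE.
Qed.

Lemma quot_iso (I T : finType) (oT : operations S T) (Phi : {ffun I -> A} -> T)
  (J : {set I}) :
  is_hom (pwops oA I) oT Phi -> (forall t, exists x, Phi x = t) ->
  (forall x y, Phi x = Phi y <-> {in J, forall m, x m = y m}) ->
  exists n (h : T -> {ffun 'I_n -> A}),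
    bijective h /\ is_embedding oT (@power_ops S A oA n) h.
Proof.
move=> hPhi sPhi hJ.
pose pre t := odflt [ffun _ => a0] [pick x | Phi x == t].
have preK : forall t, Phi (pre t) = t.
  move=> t; rewrite /pre; case: pickP => [x /eqP //|H].
  by have [x ex] := sPhi t; move: (H x); rewrite ex eqxx.
pose h t := [ffun i : 'I_#|J| => pre t (enum_val i)].
have hinj : injective h.
  move=> t t' /ffunP e; rewrite -(preK t) -(preK t'); apply/hJ => m mJ.
  by have := e (enum_rank_in mJ m); rewrite !ffunE enum_rankK_in.
have hhom : is_hom oT (@power_ops S A oA #|J|) h.
  move=> f args; apply/ffunP => i; rewrite /power_ops !ffunE.
  have : Phi (pre (oT f args)) = Phi (pwops oA I f (fun j => pre (args j))).
    rewrite hPhi preK; congr (oT f _); apply: functional_extensionality => j.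
    by rewrite preK.
  move/hJ/(_ (enum_val i) (enum_valP i)) ->; rewrite /pwops ffunE.
  congr (oA _); apply: functional_extensionality => j; by rewrite ffunE.
pose ext (z : {ffun 'I_#|J| -> A}) :=
  [ffun m => if [pick i : 'I_#|J| | enum_val i == m] is Some i then z i else a0].
have hext : forall z, h (Phi (ext z)) = z.
  move=> z; apply/ffunP => i; rewrite ffunE.
  have : Phi (pre (Phi (ext z))) = Phi (ext z) by rewrite preK.
  move/hJ/(_ (enum_val i) (enum_valP i)) ->; rewrite ffunE.
  case: pickP => [i' /eqP /enum_val_inj -> //|/(_ i)]; by rewrite eqxx.
exists #|J|, h; split; last by [].
exists (fun z => Phi (ext z)); last exact: hext.
move=> t; apply: hinj; by rewrite hext.
Qed.

Lemma struct (T : finType) (oT : operations S T) :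
  in_Vfin oA oT -> exists n (h : T -> {ffun 'I_n -> A}),
    bijective h /\ is_embedding oT (@power_ops S A oA n) h.
Proof.
move=> [T0 hid].
have [t0 _] : exists t0 : T, true by move/card_gt0P: T0 => [t _]; exists t.
pose N := #|T|.
pose w := fun j : 'I_N.+1 => nth t0 (enum T) j.
pose M := {ffun 'I_N.+1 -> A}.
have ex : forall F : {ffun M -> A},
    exists t : term S N.+1, forall v, eval oA v t = F (finfun v).
  by move=> F; apply: prim.
pose tm F := proj1_sig (constructive_indefinite_description _ (ex F)).
have tmP : forall F v, eval oA v (tm F) = F (finfun v).
  by move=> F; rewrite /tm; case: constructive_indefinite_description.
pose Phi F := eval oT w (tm F).
have PhiE : forall (F : {ffun M -> A}) (s : term S N.+1), (forall v, eval oA v s = F (finfun v)) -> Phi F = eval oT w s.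
  move=> F s hs; apply: hid => v; by rewrite tmP hs.
have hPhi : is_hom (pwops oA M) oT Phi.
  move=> f Fs; rewrite (PhiE _ (@App _ _ f (fun j => tm (Fs j)))) //=.
  move=> v /=; rewrite /pwops ffunE; congr (oA _).
  apply: functional_extensionality => j; by rewrite tmP.
have sPhi : forall t, exists x, Phi x = t.
  move=> t; have it : index t (enum T) < N.+1.
    by apply: leqW; rewrite /N cardE index_mem mem_enum.
  exists [ffun m : M => m (Ordinal it)]; rewrite (PhiE _ (@Var _ _ (Ordinal it))) /=.
    by rewrite /w /= nth_index ?mem_enum.
  by move=> v /=; rewrite !ffunE.
have [J hJ] := kernel_set hPhi.
exact: quot_iso hPhi sPhi hJ.
Qed.

End Primal.
End Gen.
Arguments pwops {S A} oA I.

Section Order.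
Variables (A : finType) (lt : A -> A -> Prop).
Hypothesis slo : strict_linear_order lt.

Definition altlt n (rk : 'I_n -> nat) (x y : {ffun 'I_n -> A}) :=
  exists i, (forall k, rk i < rk k -> x k = y k) /\ lt (x i) (y i).

Lemma antilex_alt n (pi : 'S_n) x y :
  antilex_lt lt pi x y <-> altlt (fun i => val (pi^-1 i)%g) x y.
Proof.
split=> [[s [hs hl]]|[i [hi hl]]].
- exists (pi s); rewrite permK; split=> // k sk.
  rewrite -(permKV pi k); exact: hs.
- exists (pi^-1 i)%g; rewrite permKV; split=> // t st; apply: hi; by rewrite permK.
Qed.

Section Rk.
Variables (n : nat) (rk : 'I_n -> nat).
Hypothesis rk_inj : injective rk.

Lemma alt_irr x : ~ altlt rk x x.
Proof. by case: slo => irr _ [i [_ /irr]]. Qed.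

Lemma alt_asym x y : altlt rk x y -> altlt rk y x -> False.
Proof.
case: slo => irr [tr tot].
move=> [i [hi li]] [j [hj lj]].
case: (ltngtP (rk i) (rk j)) => [ij|ji|/rk_inj e].
- by move: lj; rewrite (hi j ij) => /irr.
- by move: li; rewrite (hj i ji) => /irr.
- subst j; exact: (irr _ (tr _ _ _ li lj)).
Qed.

Lemma alt_trans x y z : altlt rk x y -> altlt rk y z -> altlt rk x z.
Proof.
case: slo => irr [tr tot].
move=> [i [hi li]] [j [hj lj]].
case: (ltngtP (rk i) (rk j)) => [ij|ji|/rk_inj e].
- exists j; split; last by rewrite (hi j ij).
  move=> k jk; rewrite hi; [apply: hj => // | exact: ltn_trans ij jk].
- exists i; split; last by rewrite -(hj i ji).
  move=> k ik; rewrite hi //; apply: hj; exact: ltn_trans ji ik.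
- subst j; exists i; split; last exact: tr li lj.
  by move=> k ik; rewrite hi ?hj.
Qed.

Lemma alt_total x y : x != y -> altlt rk x y \/ altlt rk y x.
Proof.
case: slo => irr [tr tot].
move=> nxy.
case: (pickP (fun i => x i != y i)) => [i0 hi0|H]; last first.
  by case/eqP: nxy; apply/ffunP => i; move: (H i) => /negbFE/eqP.
case: (@arg_maxnP _ i0 (fun i => x i != y i) rk hi0) => i hi hmax.
have eqs : forall k, rk i < rk k -> x k = y k.
  move=> k ik; apply/eqP; apply/negPn/negP => /hmax; rewrite /geq /=; by rewrite leqNgt ik.
case: (tot (x i) (y i)) => [|l|l]; first exact/eqP.
- by left; exists i.
- by right; exists i; split=> // k ik; rewrite eqs.
Qed.

End Rk.

Lemma rk_perm_inj n (pi : 'S_n) : injective (fun i => val (pi^-1 i)%g).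
Proof. move=> a b /val_inj; exact: (@perm_inj _ (pi^-1)%g). Qed.

Lemma le_linear n (pi : 'S_n) : linear_order (antilex_le lt pi).
Proof.
have ri := rk_perm_inj (pi:=pi).
rewrite /antilex_le; split; [by left|split; [|split]].
- move=> x y [->//|l1] [//|l2]; move/antilex_alt: l1 => l1; move/antilex_alt: l2 => l2.
  case: (alt_asym ri l1 l2).
- move=> x y z [->//|l1] [<-|l2]; [by right|right].
  move/antilex_alt: l1 => l1; move/antilex_alt: l2 => l2; apply/antilex_alt.
  exact: (alt_trans ri l1 l2).
- move=> x y; case: (eqVneq x y) => [->|nxy]; first by left; left.
  by case: (alt_total (fun i => val (pi^-1 i)%g) nxy) => l; [left|right]; right; apply/antilex_alt.
Qed.

Lemma pull n m (rk : 'I_n -> nat) (rk' : 'I_m -> nat) (g : 'I_m -> 'I_n)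
  (gs : forall i, exists j, g j = i)
  (mono : forall j1 j2, rk (g j1) < rk (g j2) -> rk' j1 < rk' j2)
  (x y : {ffun 'I_n -> A}) (X Y : {ffun 'I_m -> A}) :
  (forall j, X j = x (g j)) -> (forall j, Y j = y (g j)) ->
  altlt rk' X Y -> altlt rk x y.
Proof.
move=> hX hY [j [hj lj]]; exists (g j); split; last by rewrite -hX -hY.
move=> k jk; have [j' ej] := gs k; subst k; rewrite -hX -hY; apply: hj; exact: mono.
Qed.

End Order.

Lemma rank_perm m n (g : 'I_m -> 'I_n) (rk : 'I_n -> nat) :
  exists sigma : 'S_m, forall j1 j2, rk (g j1) < rk (g j2) -> sigma j1 < sigma j2.
Proof.
pose key (j : 'I_m) := rk (g j) * m + j.
have key_mono : forall j1 j2, rk (g j1) < rk (g j2) -> key j1 < key j2.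
  move=> j1 j2 h; rewrite /key; have := ltn_ord j1; have := ltn_ord j2; nia.
have key_inj : injective key.
  move=> j1 j2 e; apply/val_inj; have := congr1 (modn^~ m) e.
  by rewrite /key !modnMDl !modn_small.
pose P (j : 'I_m) := [set j' | key j' < key j].
have Plt : forall j, #|P j| < m.
  move=> j; have := proper_card (A:=P j) (B:=[set: 'I_m]); rewrite cardsT card_ord.
  apply; apply/properP; split; first exact: subsetT.
  by exists j; rewrite ?in_setT // inE ltnn.
pose rho j := Ordinal (Plt j).
have rho_mono : forall j1 j2, key j1 < key j2 -> rho j1 < rho j2.
  move=> j1 j2 h; rewrite /rho /=; apply: proper_card; apply/properP; split.
  - apply/subsetP => j; rewrite !inE => hj; exact: ltn_trans hj h.
  - by exists j1; rewrite !inE ?ltnn.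
have rho_inj : injective rho.
  move=> j1 j2 e; apply: key_inj.
  case: (ltngtP (key j1) (key j2)) => // /rho_mono; by rewrite e ltnn.
exists (perm rho_inj) => j1 j2 h; rewrite !permE; exact: rho_mono (key_mono _ _ h).
Qed.

Theorem lemma7p4 (S : signature) (A : finType) (oA : operations S A)
  (lt : A -> A -> Prop) :
  primal oA -> strict_linear_order lt ->
  is_order_expansion (in_Vfin oA) (in_OVfin oA lt) /\
  is_reasonable (in_Vfin oA) (in_OVfin oA lt).
Proof.
move=> [A2 prim] slo.
have [a0 [a1 a01]] : exists a0 a1 : A, a0 != a1.
  by case/card_gt1P: A2 => x [y [_ _ nxy]]; exists x, y.
split; first split.
- move=> T o r [n [pi [h [hb [[hh hinj] hr]]]]].
  change (@power_ops S A oA n) with (pwops oA 'I_n) in hh.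
  have [lin1 [lin2 [lin3 lin4]]] := le_linear slo pi.
  split.
  + split; first by move=> x; apply/hr; exact: lin1.
    split; first by move=> x y /hr l1 /hr l2; apply: hinj; exact: lin2.
    split; first by move=> x y z /hr l1 /hr l2; apply/hr; exact: lin3 l1 l2.
    by move=> x y; case: (lin4 (h x) (h y)) => l; [left|right]; apply/hr.
  + split.
    * by case: hb => g _ hK; apply/card_gt0P; exists (g [ffun _ => a0]).
    * move=> k s t hst w; apply: hinj; rewrite !(hom_eval hh) !eval_pw.
      by apply/ffunP => i; rewrite !ffunE hst.
- move=> T o HV; have [n [h [hb [hh hinj]]]] := struct prim a01 HV.
  exists (fun x y => antilex_le lt 1%g (h x) (h y)), n, 1%g, h.
  by split=> //; split.
move=> T1 T2 o1 o2 f _ HV2 [fh finj] r1 [n [pi [h1 [hb1 [[hh1 hinj1] hr1]]]]].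
have [m [h2 [hb2 [hh2 hinj2]]]] := struct prim a01 HV2.
change (@power_ops S A oA n) with (pwops oA 'I_n) in hh1.
change (@power_ops S A oA m) with (pwops oA 'I_m) in hh2.
case: (hb1) => h1i h1K h1Ki.
pose F x := h2 (f (h1i x)).
have Finj : injective F.
  by move=> x y /hinj2/finj/(can_inj h1Ki).
have h1ihom : forall g args, h1i (pwops oA 'I_n g args) = o1 g (fun k => h1i (args k)).
  move=> g args; apply: hinj1; rewrite h1Ki hh1; congr (pwops oA 'I_n g _).
  by apply: functional_extensionality => k; rewrite h1Ki.
have coord : forall j, exists i, forall x, F x j = x i.
  move=> j; apply: (proj_hom prim a01 A2 (phi := fun x => F x j)).
  move=> g args; rewrite /F h1ihom fh hh2 /pwops ffunE; congr (oA g _).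
have [g hg] := fin_all_exists coord.
have gs : forall i, exists j, g j = i.
  move=> i; case: (pickP (fun j => g j == i)) => [j /eqP|H]; first by exists j.
  exfalso.
  have : [ffun _ : 'I_n => a0] = [ffun k => if k == i then a1 else a0].
    apply: Finj; apply/ffunP => j; by rewrite !hg !ffunE (H j).
  by move/ffunP/(_ i); rewrite !ffunE eqxx => /eqP; rewrite (negbTE a01).
pose rk := fun i => val (pi^-1 i)%g.
have [sigma hsig] := rank_perm g rk.
pose pi' := (sigma^-1)%g.
have mono : forall j1 j2, rk (g j1) < rk (g j2) ->
    (fun j => val (pi'^-1 j)%g) j1 < (fun j => val (pi'^-1 j)%g) j2.
  by move=> j1 j2 h /=; rewrite /pi' !invgK; exact: hsig.
have rkinj := rk_perm_inj (pi:=pi).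
have rk'inj := rk_perm_inj (pi:=pi').
have ltE : forall u v, antilex_lt lt pi u v <-> antilex_lt lt pi' (F u) (F v).
  move=> u v; split.
  + move/antilex_alt => l.
    have nuv : u != v by apply/eqP => e; subst v; exact: (alt_irr slo l).
    have nF : F u != F v by apply: contra nuv => /eqP /Finj ->.
    case: (alt_total slo (fun j => val (pi'^-1 j)%g) nF) => l'; first exact/antilex_alt.
    exfalso; apply: (alt_asym slo rkinj l).
    exact: (pull gs mono (hg^~ v) (hg^~ u) l').
  + move/antilex_alt => l; apply/antilex_alt.
    exact: (pull gs mono (hg^~ u) (hg^~ v) l).
pose r2 := fun a b => antilex_le lt pi' (h2 a) (h2 b).
exists r2; split.
  by exists m, pi', h2; split=> //; split.
split; first by split.
move=> x y.
have FE : forall z, F (h1 z) = h2 (f z) by move=> z; rewrite /F h1K.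
rewrite hr1 /r2 -!FE /antilex_le.
split=> [[->|l]|[/Finj ->|l]]; [by left|right; exact/ltE|by left|right; exact/ltE].
Qed.
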